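(* Let $q$ be a power of a prime $p$, $r$ a prime, $\mathbb{F}=\mathbb{F}_q$, $\mathbb{E}=\mathbb{F}_{q^r}$, and let $V$ be an irreducible $\mathbb{F}\,\Gamma\mathrm{L}(1,\mathbb{E}/\mathbb{F})$-module. Then $\dim_{\mathbb{F}}V$ equals $r$ or divides $r-1$. In particular, the maximum dimension of an irreducible $\Gamma\mathrm{L}(1,\mathbb{E}/\mathbb{F})$-module over $\mathbb{F}$ is $r$.
   Context: $\Gamma\mathrm{L}(1,\mathbb{E}/\mathbb{F})$ is the group of $\mathbb{F}$-linear maps of $\mathbb{E}$ of the form $x\mapsto \lambda x^{\sigma}$ with $\lambda\in\mathbb{E}^\times$, $\sigma\in\mathrm{Gal}(\mathbb{E}/\mathbb{F})$; it is isomorphic to $\langle\phi,\mu\mid \phi^r=\mu^{q^r-1}=1,\ \mu^\phi=\mu^q\rangle$. *)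

(* Defs.v *)
From HB Require Import structures.
From mathcomp Require Import all_boot all_order all_algebra all_fingroup all_solvable all_field all_character.
Set Implicit Arguments. Unset Strict Implicit. Unset Printing Implicit Defensive.
Import GRing.Theory.
Local Open Scope ring_scope.

(* Gamma L(1, E/F) for E = F_{q^r} and F = F_q (the subfield of E of order q),
   realised as a set of permutations of E: the F-linear maps x |-> l * x^sigma
   with l in E^x and sigma in Gal(E/F) = { x |-> x^(q^i) | i < r }. *)
Definition GammaL1 (E : finFieldType) (q r : nat) : {set {perm E}} :=
  [set s : {perm E} | [exists l : E, exists i : 'I_r,
      (l != 0) && [forall x : E, s x == l * x ^+ (q ^ i)]]].

(* Main.v *)
Require Import Defs.
From Stdlib Require Import Classical_Prop.
From mathcomp Require Import zify.
From HB Require Import structures.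
From mathcomp Require Import all_boot all_order all_algebra all_fingroup all_solvable all_field all_character.
Set Implicit Arguments. Unset Strict Implicit. Unset Printing Implicit Defensive.
Import GRing.Theory.
Local Open Scope ring_scope.
Import Pdiv.RingMonic.

Lemma sum_frob (R : comNzRingType) (I : Type) (s : seq I) (P : pred I) (f : I -> R) e :
  [pchar R].-nat e -> (\sum_(i <- s | P i) f i) ^+ e = \sum_(i <- s | P i) f i ^+ e.
Proof.
move=> he; apply: (big_morph (fun x => x ^+ e)).
  by move=> x y; rewrite exprDn_pchar.
by rewrite expr0n; case: e he.
Qed.

Lemma horner_frob (R : comNzRingType) (P : {poly R}) (x : R) e :
  [pchar R].-nat e -> (forall i, P`_i ^+ e = P`_i) -> P.[x] ^+ e = P.[x ^+ e].
Proof.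
move=> he hc; rewrite !horner_coef sum_frob //; apply: eq_bigr => i _.
by rewrite exprMn hc -!exprM mulnC.
Qed.

Lemma hmx_frob (F : fieldType) n' (M : 'M[F]_n'.+1) (f : {poly F}) e :
  [pchar F].-nat e -> (forall c : F, c ^+ e = c) ->
  horner_mx M f ^+ e = horner_mx (M ^+ e) f.
Proof.
move=> he hc.
have fE : f = \sum_(i < size f) f`_i *: 'X^i by rewrite -poly_def coefK.
have he' : [pchar {poly F}].-nat e.
  by apply: sub_in_pnat he => x _; rewrite pchar_poly.
rewrite -rmorphXn /= [in LHS]fE [in RHS]fE sum_frob // !rmorph_sum.
apply: eq_bigr => i _; rewrite exprZn hc -exprM mulnC exprM.
by rewrite -!mul_polyC !rmorphM !rmorphXn /= !horner_mx_C !horner_mx_X.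
Qed.
Section QF.
Variables (F : finFieldType) (q : nat).
Hypotheses (hFq : #|F| = q) (hq : [pchar F].-nat q).
Variables (h : {poly F}) (hI : monic_irreducible_poly h).
Local Notation L := {poly %/ h with hI}.
Local Notation d := (size h).-1.

Lemma q_gt1 : (1 < q)%N.
Proof. by rewrite -hFq; apply: finNzRing_gt1. Qed.

Lemma fixF t (c : F) : c ^+ (q ^ t) = c.
Proof.
elim: t => [|t IH]; first by rewrite expr1.
by rewrite expnSr exprM IH -hFq expf_card.
Qed.

Lemma qnat t : [pchar F].-nat (q ^ t)%N.
Proof. by rewrite pnatX hq. Qed.

Lemma d_gt0 : (0 < d)%N.
Proof. by case: hI => [[h1 _] _]; rewrite -ltnS prednK // ltnW. Qed.

Lemma cardL : #|L| = (q ^ d)%N.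
Proof. by rewrite card_qfpoly hFq. Qed.

Lemma fixd (y : L) a b : y ^+ (q ^ (a * d + b)) = y ^+ (q ^ b).
Proof.
elim: a => [|a IH]; first by rewrite mul0n add0n.
by rewrite mulSn -addnA expnD exprM -cardL expf_card IH.
Qed.

Lemma qfrob_elem (y : L) t : ('qX : L) ^+ (q ^ t) = 'qX -> y ^+ (q ^ t) = y.
Proof.
move=> hX.
have yE : y = (map_poly (qpolyC h) (val y)).[ 'qX ].
  rewrite -in_qpoly_comp_horner comp_polyXr; apply: val_inj => /=.
  by rewrite Pdiv.Ring.rmodp_small // size_mk_monic.
rewrite [in LHS]yE horner_frob.
- by rewrite hX -yE.
- by apply: sub_in_pnat (qnat t) => x _; rewrite pchar_qpoly.
- by move=> i; rewrite coef_map /= -rmorphXn /= fixF.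
Qed.

Lemma all_fixed_le t : (0 < t)%N -> (forall y : L, y ^+ (q ^ t) = y) -> (d <= t)%N.
Proof.
move=> t0 hy.
pose P : {poly L} := 'X^(q ^ t) - 'X.
have q1 := q_gt1.
have qt1 : (1 < q ^ t)%N by rewrite -(expn0 q) ltn_exp2l.
have szP : size P = (q ^ t).+1.
  by rewrite /P size_polyDl ?size_polyXn // size_polyN size_polyX ltnS.
have P0 : P != 0 by rewrite -size_poly_eq0 szP.
have := max_poly_roots P0 (_ : all (root P) (enum L)) (enum_uniq L).
rewrite -cardE cardL szP ltnS leq_exp2l //; apply.
by apply/allP => y _; rewrite /root /P !hornerE hy subrr.
Qed.

Lemma deg_dvd m : h %| 'X^(q ^ m) - 'X -> (d %| m)%N.
Proof.
move=> /dvdpP [c hc].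
have hX : ('qX : L) ^+ (q ^ m) = 'qX.
  apply/eqP; rewrite -subr_eq0; apply/eqP.
  rewrite -rmorphXn /= -rmorphB /=; apply: val_inj => /=.
  have hm : h \is monic by case: hI.
  by rewrite hc (mk_monicE hI) (Pdiv.RingMonic.rmodp_mull hm).
rewrite {1}(divn_eq m d) in hX.
have fy : forall y : L, y ^+ (q ^ (m %% d)) = y.
  by move=> y; have := qfrob_elem y hX; rewrite fixd.
case: (posnP (m %% d)) => [h0|m0]; first by rewrite /dvdn h0.
by move: (all_fixed_le m0 fy); rewrite leqNgt ltn_pmod // d_gt0.
Qed.

Lemma frob_inj i (y z : L) : y ^+ (q ^ i) = z ^+ (q ^ i) -> y = z.
Proof.
move=> e.
have E (w : L) : w = (w ^+ (q ^ i)) ^+ (q ^ (i * d - i)).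
  rewrite -exprM -expnD subnKC; last by rewrite leq_pmulr ?d_gt0.
  by rewrite -[(i * d)%N]addn0 fixd expr1.
by rewrite (E y) (E z) e.
Qed.

Lemma qX_inj i j : (i < d)%N -> (j < d)%N ->
  ('qX : L) ^+ (q ^ i) = 'qX ^+ (q ^ j) -> i = j.
Proof.
wlog ij : i j / (i <= j)%N.
  move=> W id jd e; case: (leqP i j) => [l|l]; first exact: W.
  by apply/esym/W => //; apply: ltnW.
move=> id jd e; apply/eqP; rewrite eqn_leq ij /= leqNgt; apply/negP => lt.
have t0 : (0 < j - i)%N by rewrite subn_gt0.
have : ('qX : L) ^+ (q ^ (j - i)) = 'qX.
  apply: (@frob_inj i); rewrite -exprM -expnD subnK ?(ltnW lt) //.
move=> /qfrob_elem fy.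
have := all_fixed_le t0 fy; rewrite leqNgt.
by rewrite (leq_ltn_trans (leq_subr _ _) jd).
Qed.

End QF.

Lemma poly_small_def (R : nzRingType) (g : {poly R}) d :
  (size g <= d)%N -> g = \sum_(i < d) g`_i *: 'X^i.
Proof.
move=> sz; rewrite -poly_def; apply/polyP => i; rewrite coef_poly.
by case: ifP => // /negbT; rewrite -leqNgt => di; rewrite nth_default // (leq_trans sz).
Qed.

Section Krylov.
Variables (F : fieldType) (n' : nat).
Local Notation n := n'.+1.
Implicit Types (M X : 'M[F]_n) (v : 'rV[F]_n).

Definition kry M v : 'M_(degree_mxminpoly M, n) :=
  \matrix_(i < degree_mxminpoly M) (v *m M ^+ i).

Lemma horner_mod M f : horner_mx M (f %% mxminpoly M) = horner_mx M f.
Proof. by rewrite -horner_mxK mx_inv_hornerK // horner_mx_mem. Qed.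

Lemma kry_mem M v f : (v *m horner_mx M f <= kry M v)%MS.
Proof.
rewrite -horner_mod (poly_small_def (size_mod_mxminpoly M f)).
rewrite rmorph_sum mulmx_sumr; apply: summx_sub => i _.
rewrite -mul_polyC rmorphM rmorphXn /= horner_mx_C horner_mx_X.
rewrite -mulmxE mul_scalar_mx -scalemxAr scalemx_sub //.
by rewrite -(rowK (fun i => v *m M ^+ i) i) row_sub.
Qed.

Lemma kry_v M v : (v <= kry M v)%MS.
Proof. by have := kry_mem M v 1; rewrite rmorph1 mulmx1. Qed.

Lemma kry_rank M v : (\rank (kry M v) <= degree_mxminpoly M)%N.
Proof. exact: rank_leq_row. Qed.

Lemma kry_stab M v X :
  (forall i, (v *m M ^+ i *m X <= kry M v)%MS) -> (kry M v *m X <= kry M v)%MS.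
Proof. by move=> h; apply/row_subP => i; rewrite row_mul rowK. Qed.

Lemma kry_M M v : (kry M v *m M <= kry M v)%MS.
Proof.
apply: kry_stab => i; have := kry_mem M v ('X^(i.+1)).
by rewrite rmorphXn /= horner_mx_X exprSr -mulmxE mulmxA.
Qed.

Lemma kry_neq0 M v : v != 0 -> kry M v != 0.
Proof. by apply: contraNneq => h; have := kry_v M v; rewrite h => /submx0null ->. Qed.

Lemma deg_le_n M : (degree_mxminpoly M <= n)%N.
Proof.
have := dvdp_leq (monic_neq0 (char_poly_monic M)) (mxminpoly_dvd_char M).
by rewrite size_mxminpoly size_char_poly.
Qed.

Lemma minpoly_irr M :
  (forall f, kermx (horner_mx M f) != 0 -> horner_mx M f = 0) ->
  irreducible_poly (mxminpoly M).
Proof.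
move=> hk; split; first by rewrite size_mxminpoly ltnS mxminpoly_nonconstant.
move=> g szg gdv.
have m0 : mxminpoly M != 0 by apply: monic_neq0; apply: mxminpoly_monic.
have g0 : g != 0.
  by apply: (contraNneq _ m0) => g0; have := gdv; rewrite g0 dvd0p.
suff hg : horner_mx M g = 0.
  by rewrite /eqp gdv mxminpoly_min.
apply: hk; rewrite kermx_eq0 row_free_unit; apply/negP => gu.
case/dvdpP: gdv => c hc.
have c0 : c != 0 by apply: (contraNneq _ m0) => c0; rewrite hc c0 mul0r.
have : horner_mx M c = 0.
  have := mx_root_minpoly M; rewrite hc rmorphM /= => e.
  by rewrite -(mulrK gu (horner_mx M c)) e mul0r.
move/mxminpoly_min/(dvdp_leq c0); rewrite hc size_mul // .
have : (1 < size g)%N.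
  by rewrite ltn_neqAle eq_sym szg lt0n size_poly_eq0 g0.
move=> sg1.
move: sg1; case: (size g) => [|[|s]] //= _; rewrite addnS /= => /leq_trans/(_ (leqnn _)).
by rewrite -{2}[size c]addn0 leq_add2l.
Qed.

End Krylov.

Section MatrixLemma.
Variables (F : finFieldType) (q r : nat).
Hypotheses (hFq : #|F| = q) (hq : [pchar F].-nat q) (hr : prime r).
Variables (n' : nat) (A B : 'M[F]_n'.+1).
Local Notation n := n'.+1.
Hypotheses (hA : A ^+ (q ^ r) = A) (hB : B ^+ r = 1) (hAB : A * B = B * A ^+ q).
Hypothesis hirr : forall m (U : 'M[F]_(m, n)),
  (U *m A <= U)%MS -> (U *m B <= U)%MS -> U != 0 -> row_full U.

Lemma r_gt0 : (0 < r)%N. Proof. exact: prime_gt0. Qed.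

Lemma AkB k : A ^+ k * B = B * A ^+ (k * q).
Proof.
elim: k => [|k IH]; first by rewrite !expr0 mul1r mulr1.
by rewrite exprS -mulrA IH mulrA hAB -mulrA -exprD mulSn.
Qed.

Lemma AkBi k i : A ^+ k * B ^+ i = B ^+ i * A ^+ (k * q ^ i).
Proof.
elim: i => [|i IH]; first by rewrite !expr0 mul1r mulr1 muln1.
by rewrite exprSr mulrA IH -mulrA AkB mulrA -exprSr expnSr mulnA.
Qed.

Lemma hornerB f : horner_mx A f * B = B * horner_mx (A ^+ q) f.
Proof.
elim/poly_ind: f => [|f c IH]; first by rewrite !rmorph0 mul0r mulr0.
rewrite !rmorphD !rmorphM /= !horner_mx_X !horner_mx_C mulrDl mulrDr.
rewrite -mulrA hAB mulrA IH -mulrA; congr (_ + _).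
by rewrite -!mulmxE scalar_mxC.
Qed.

Lemma Bhorner f : B * horner_mx A f = horner_mx A f ^+ (q ^ r.-1) * B.
Proof.
rewrite -rmorphXn hornerB rmorphXn hmx_frob ?(qnat hq) //; last exact: (fixF hFq r.-1).
by rewrite -exprM -expnS prednK ?r_gt0 // hA.
Qed.

Lemma kerinv (N : 'M[F]_n) :
  (kermx N *m A <= kermx N)%MS -> (kermx N *m B <= kermx N)%MS ->
  kermx N != 0 -> N = 0.
Proof.
move=> ha hb /(hirr ha hb); rewrite -sub1mx => /sub_kermxP.
by rewrite mul1mx.
Qed.

Lemma kerA f : (kermx (horner_mx A f) *m A <= kermx (horner_mx A f))%MS.
Proof.
apply/sub_kermxP; rewrite -mulmxA mulmxE -{2}(horner_mx_X A).
by rewrite comm_horner_mx2 -mulmxE horner_mx_X mulmxA mulmx_ker mul0mx.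
Qed.

Lemma kerB f : (kermx (horner_mx A f) *m B <= kermx (horner_mx A f))%MS.
Proof.
apply/sub_kermxP; rewrite -mulmxA mulmxE Bhorner.
have := qnat hq r.-1; case: (q ^ r.-1)%N => // e _.
by rewrite exprS -!mulmxE !mulmxA mulmx_ker !mul0mx.
Qed.

Lemma irrA : irreducible_poly (mxminpoly A).
Proof. by apply: minpoly_irr => f; apply: kerinv; [apply: kerA | apply: kerB]. Qed.


Definition mI : monic_irreducible_poly (mxminpoly A) := (irrA, mxminpoly_monic A).

Lemma degA_dvd : (degree_mxminpoly A %| r)%N.
Proof.
have := deg_dvd hFq hq mI (m := r); rewrite size_mxminpoly /=; apply.
by apply: mxminpoly_min; rewrite rmorphB rmorphXn /= horner_mx_X hA subrr.
Qed.

Section Vand.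
Local Notation mA := (mxminpoly A).
Local Notation L := {poly %/ mA with mI}.
Definition psi (y : L) : 'M[F]_n := horner_mx A (polyn y).

Lemma psi_in f : psi (in_qpoly mA f) = horner_mx A f.
Proof.
rewrite /psi /= (mk_monicE mI).
rewrite [in RHS](Pdiv.RingMonic.rdivp_eq (mxminpoly_monic A) f).
by rewrite rmorphD rmorphM /= mx_root_minpoly mulr0 add0r.
Qed.

Lemma psi_val (y : L) : y = in_qpoly mA (polyn y).
Proof. by apply: val_inj => /=; rewrite Pdiv.Ring.rmodp_small // size_mk_monic. Qed.

Lemma psiD (y z : L) : psi (y + z) = psi y + psi z.
Proof. by rewrite [y]psi_val [z]psi_val -in_qpolyD !psi_in rmorphD. Qed.

Lemma psiM (y z : L) : psi (y * z) = psi y * psi z.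
Proof. by rewrite [y]psi_val [z]psi_val -in_qpolyM !psi_in rmorphM. Qed.

Lemma psi0 : psi 0 = 0.
Proof. by rewrite -in_qpoly0 psi_in rmorph0. Qed.

Lemma psi1 : psi 1 = 1.
Proof. by rewrite -in_qpoly1 psi_in rmorph1. Qed.

Lemma psiX : psi 'qX = A.
Proof. by rewrite psi_in horner_mx_X. Qed.

Lemma psiXn (y : L) k : psi (y ^+ k) = psi y ^+ k.
Proof.
elim: k => [|k IH]; first by rewrite !expr0 psi1.
by rewrite !exprS psiM IH.
Qed.

Lemma psi_sum (I : Type) (s : seq I) (P : pred I) (f : I -> L) :
  psi (\sum_(i <- s | P i) f i) = \sum_(i <- s | P i) psi (f i).
Proof. exact: (big_morph psi psiD psi0). Qed.

Lemma psi_comm (y : L) k : psi y * A ^+ k = A ^+ k * psi y.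
Proof.
have -> : A ^+ k = horner_mx A ('X^k) by rewrite rmorphXn /= horner_mx_X.
exact: comm_horner_mx2.
Qed.

Hypothesis dA : degree_mxminpoly A = r.

Lemma T_neq0 : \sum_(i < r) B ^+ i != 0.
Proof.
pose x : 'rV[L]_r := \row_(i < r) ('qX ^+ (q ^ i)).
pose V := Vandermonde r x.
have Vu : V \in unitmx.
  rewrite unitmxE det_Vandermonde unitfE.
  apply/prodf_neq0 => i _; apply/prodf_neq0 => j ij; rewrite subr_eq0 !mxE.
  apply/eqP => /(qX_inj hFq hq); rewrite size_mxminpoly /= dA => /(_ (ltn_ord j) (ltn_ord i)).
  by move=> e; move: ij; rewrite e ltnn.
pose i0 : 'I_r := Ordinal r_gt0.
pose c k := invmx V i0 k.
have key i : \sum_k c k * x 0 i ^+ k = (i0 == i)%:R.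
  have := congr1 (fun M : 'M[L]_r => M i0 i) (mulVmx Vu); rewrite !mxE => <-.
  by apply: eq_bigr => k _; rewrite /c /V !mxE.
apply/negP => /eqP T0.
have S1 : \sum_(i < r) B ^+ i * psi (\sum_k c k * x 0 i ^+ k) = 1.
  under eq_bigr => i _ do rewrite key.
  rewrite (bigD1 i0) //= big1 ?addr0.
    by rewrite psi1 expr0 mulr1.
  by move=> i ni; rewrite eq_sym (negbTE ni) psi0 mulr0.
have S0 : \sum_(i < r) B ^+ i * psi (\sum_k c k * x 0 i ^+ k) = 0.
  transitivity (\sum_(k < r) A ^+ k * (\sum_(i < r) B ^+ i) * psi (c k)); last first.
    by apply: big1 => k _; rewrite T0 mulr0 mul0r.
  under eq_bigr => i _ do rewrite psi_sum mulr_sumr.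
  rewrite exchange_big /=; apply: eq_bigr => k _.
  rewrite mulr_sumr mulr_suml; apply: eq_bigr => i _.
  rewrite psiM psiXn !mxE psiXn psiX -exprM psi_comm mulrA.
  by rewrite AkBi mulnC.
by move: (oner_eq0 'M[F]_n); rewrite -S1 S0 eqxx.
Qed.

End Vand.

Lemma rV_neq0 : (delta_mx 0 0 : 'rV[F]_n) != 0.
Proof.
apply/eqP => /(congr1 (fun M : 'rV[F]_n => M 0 0)); rewrite !mxE eqxx /=.
by move/eqP; rewrite oner_eq0.
Qed.

Lemma scalar_case : is_scalar_mx A -> (n %| r.-1)%N.
Proof.
case/is_scalar_mxP => a hAa.
have scal m (U : 'M[F]_(m, n)) : (U *m A <= U)%MS.
  by rewrite hAa mul_mx_scalar scalemx_sub.
have irrB : irreducible_poly (mxminpoly B).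
  apply: minpoly_irr => f; apply: kerinv; first exact: scal.
  apply/sub_kermxP; rewrite -mulmxA mulmxE -{2}(horner_mx_X B).
  by rewrite comm_horner_mx2 -mulmxE horner_mx_X mulmxA mulmx_ker mul0mx.
have dBn : degree_mxminpoly B = n.
  apply/anti_leq; rewrite deg_le_n /=.
  have := @hirr _ (kry B (delta_mx 0 0)) (scal _ _) (kry_M _ _) (kry_neq0 _ rV_neq0).
  by move/eqP <-; apply: kry_rank.
rewrite -dBn.
case: (boolP (r \in [pchar F])) => [rc | nrc].
  have hX1 : horner_mx B ('X - 1) = 0.
    apply: kerinv; first exact: scal.
      apply/sub_kermxP; rewrite -mulmxA mulmxE -{2}(horner_mx_X B).
      by rewrite comm_horner_mx2 -mulmxE horner_mx_X mulmxA mulmx_ker mul0mx.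
    rewrite kermx_eq0 row_free_unit; apply/negP => u.
    have rn : [pchar {poly F}].-nat r.
      by rewrite pnatE // pchar_poly.
    have : horner_mx B (('X - 1) ^+ r) = 0.
      by rewrite exprDn_pchar // exprNn_pchar // expr1n rmorphB rmorphXn /= horner_mx_X hB rmorph1 subrr.
    rewrite rmorphXn /= => e.
    by move: (unitrX r u); rewrite e unitr0.
  have nz : 'X - 1 != 0 :> {poly F} by rewrite -size_poly_eq0 -polyC1 size_XsubC.
  have := dvdp_leq nz (mxminpoly_min hX1).
  rewrite -polyC1 size_XsubC size_mxminpoly ltnS.
  have := mxminpoly_nonconstant B.
  by case: (degree_mxminpoly B) => [|[|]].
have cqr : coprime q r.
  by apply: (pnat_coprime hq); rewrite pnatE // inE.
have e1 : (q ^ r.-1 %% r = 1)%N.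
  have := Euler_exp_totient cqr; rewrite totient_prime // => ->.
  by rewrite modn_small // prime_gt1.
have hBe : B ^+ (q ^ r.-1) = B.
  by rewrite (divn_eq (q ^ r.-1) r) e1 exprD mulnC exprM hB expr1n mul1r expr1.
have := deg_dvd hFq hq (irrB, mxminpoly_monic B) (m := r.-1).
rewrite size_mxminpoly /=; apply.
by apply: mxminpoly_min; rewrite rmorphB rmorphXn /= horner_mx_X hBe subrr.
Qed.

Lemma TB : (\sum_(i < r) B ^+ i) * B = \sum_(i < r) B ^+ i.
Proof.
rewrite mulr_suml; case: r hB r_gt0 => // r' hB' _.
rewrite big_ord_recr big_ord_recl /= -exprSr hB' addrC; congr (_ + _).
by apply: eq_bigr => i _; rewrite -exprSr.
Qed.

Lemma mx_main : n = r \/ (is_scalar_mx A /\ (n %| r.-1)%N).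
Proof.
case/primeP: (hr) => _ /(_ _ degA_dvd) /orP [/eqP d1 | /eqP dr].
  have sA : is_scalar_mx A by rewrite -mxminpoly_linear_is_scalar d1.
  by right; split => //; apply: scalar_case.
left; apply/anti_leq; rewrite -{2}dr deg_le_n /=.
pose T := \sum_(i < r) B ^+ i.
have [j hj] : exists j, row j T != 0.
  apply/existsP; move: (T_neq0 dr); apply: contraR; rewrite negb_exists => /forallP h.
  by apply/eqP/row_matrixP => i; rewrite row0; move: (h i); rewrite negbK => /eqP.
set u := row j T.
have uB : u *m B = u by rewrite /u -row_mul mulmxE TB.
have kB : (kry A u *m B <= kry A u)%MS.
  apply: kry_stab => i; rewrite -mulmxA mulmxE AkB -mulmxE mulmxA uB.
  by have := kry_mem A u ('X^(i * q)); rewrite rmorphXn /= horner_mx_X.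
have := hirr (kry_M _ _) kB (kry_neq0 _ hj).
move/eqP <-.
by rewrite andbT -dr kry_rank.
Qed.

End MatrixLemma.

Section Group.
Variables (p k r q : nat) (Hp : prime p) (Hk : (0 < k)%N) (Hq : q = (p ^ k)%N)
  (Hr : prime r) (F E : finFieldType) (HF : #|F| = q) (HE : #|E| = (q ^ r)%N)
  (G : {group {perm E}}) (HG : G :=: GammaL1 E q r).

Lemma chF : p \in [pchar F].
Proof. by apply: (@card_finPcharP F p k) => //; rewrite HF Hq. Qed.

Lemma hqF : [pchar F].-nat q.
Proof. by rewrite Hq pnatX (pnatE _ Hp) chF. Qed.

Lemma q1 : (1 < q)%N.
Proof. by rewrite -HF; apply: finNzRing_gt1. Qed.

Lemma fixE (x : E) : x ^+ (q ^ r) = x.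
Proof. by rewrite -HE expf_card. Qed.

Lemma frobE_inj : injective (fun x : E => x ^+ q).
Proof.
move=> x y /= e.
by rewrite -(fixE x) -(fixE y) -(prednK (prime_gt0 Hr)) expnS !exprM e.
Qed.

Definition phi : {perm E} := perm frobE_inj.

Lemma cycE : cyclic [set: {unit E}].
Proof. exact: (field_unit_group_cyclic [set: {unit E}]%G). Qed.

Lemma cycE' : exists x : {unit E}, [set: {unit E}] == <[x]>%g.
Proof. by case/cyclicP: cycE => x h; exists x; rewrite h. Qed.
Definition gen : {unit E} := xchoose cycE'.
Lemma genE : [set: {unit E}] = <[gen]>%g.
Proof. exact/eqP/(xchooseP cycE'). Qed.

Definition w : E := val gen.
Lemma w0 : w != 0.
Proof. by rewrite -unitfE; apply: (valP gen). Qed.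

Definition mu : {perm E} := perm (mulfI w0).

Lemma order_gen : #[gen]%g = (q ^ r).-1.
Proof. by rewrite orderE -genE cardsT -HE -card_finField_unit cardsT. Qed.

Lemma phiX i x : (phi ^+ i)%g x = x ^+ (q ^ i).
Proof.
rewrite permX; elim: i => [|i IH]; first by rewrite expr1.
by rewrite iterS IH permE /= -exprM expnSr.
Qed.

Lemma muX j x : (mu ^+ j)%g x = w ^+ j * x.
Proof.
rewrite permX; elim: j => [|j IH]; first by rewrite expr0 mul1r.
by rewrite iterS IH permE /= mulrA -exprS.
Qed.

Lemma mu_in : mu \in G.
Proof.
rewrite HG inE; apply/existsP; exists w; apply/existsP; exists (Ordinal (prime_gt0 Hr)).
rewrite w0 /=; apply/forallP => x; by rewrite permE expn0 expr1.
Qed.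

Lemma phi_in : phi \in G.
Proof.
rewrite HG inE; apply/existsP; exists 1; apply/existsP; exists (Ordinal (prime_gt1 Hr)).
rewrite oner_eq0 /=; apply/forallP => x; by rewrite permE expn1 mul1r.
Qed.

Lemma G_gen s : s \in G -> exists i j, s = (phi ^+ i * mu ^+ j)%g.
Proof.
rewrite HG inE => /existsP [l /existsP [i /andP [l0 /forallP hs]]].
have lu : l \is a GRing.unit by rewrite unitfE.
have : (Sub l lu : {unit E}) \in <[gen]>%g by rewrite -genE inE.
case/cycleP => j hj; exists i, j; apply/permP => x.
rewrite permM phiX muX (eqP (hs x)); congr (_ * _).
by rewrite /w -FinRing.val_unitX -hj.
Qed.

Lemma mu_pow : (mu ^+ (q ^ r))%g = mu.
Proof. by apply/permP => x; rewrite muX permE fixE. Qed.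

Lemma phi_pow : (phi ^+ r)%g = 1%g.
Proof. by apply/permP => x; rewrite phiX perm1 fixE. Qed.

Lemma mu_phi : (mu * phi = phi * mu ^+ q)%g.
Proof. by apply/permP => x; rewrite !permM muX !permE /= exprMn. Qed.


Lemma stabX (F0 : fieldType) m n (U : 'M[F0]_(m, n.+1)) (X : 'M[F0]_n.+1) e :
  (U *m X <= U)%MS -> (U *m X ^+ e <= U)%MS.
Proof.
move=> h; elim: e => [|e IH]; first by rewrite expr0 mulmx1.
rewrite exprSr -mulmxE mulmxA; exact: submx_trans (submxMr _ IH) h.
Qed.

Section Repr.
Variables (n' : nat) (rG : mx_representation F G n'.+1).
Local Notation A := (rG mu).
Local Notation B := (rG phi).

Lemma rA : A ^+ (q ^ r) = A.
Proof. by rewrite -(repr_mxX rG _ mu_in) mu_pow. Qed.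

Lemma rB : B ^+ r = 1.
Proof. by rewrite -(repr_mxX rG _ phi_in) phi_pow repr_mx1. Qed.

Lemma rAB : A * B = B * A ^+ q.
Proof.
rewrite -repr_mxMr ?mu_in ?phi_in // mu_phi repr_mxMr ?groupX ?mu_in ?phi_in //.
by rewrite (repr_mxX rG _ mu_in).
Qed.

Lemma rirr : mx_irreducible rG -> forall m (U : 'M[F]_(m, n'.+1)),
  (U *m A <= U)%MS -> (U *m B <= U)%MS -> U != 0 -> row_full U.
Proof.
case/mx_irrP => _ irr m U hUA hUB nz.
have modU : mxmodule rG <<U>>%MS.
  apply/mxmoduleP => x Gx; case: (G_gen Gx) => i [j ->].
  rewrite repr_mxM ?groupX ?phi_in ?mu_in // !(repr_mxX rG) ?phi_in ?mu_in //.
  rewrite !genmxE mulmxA.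
  apply: submx_trans (stabX _ hUA); apply: submxMr.
  apply: submx_trans (stabX _ hUB); apply: submxMr.
  by rewrite genmxE.
have nz' : <<U>>%MS != 0 by rewrite -mxrank_eq0 genmxE mxrank_eq0.
by have := irr _ modU nz'; rewrite /row_full genmxE.
Qed.

End Repr.


Lemma irr_pos n (rG : mx_representation F G n) : mx_irreducible rG -> (0 < n)%N.
Proof. by case/mx_irrP. Qed.

Lemma part1' n' (rG : mx_representation F G n'.+1) : mx_irreducible rG ->
  n'.+1 = r \/ (is_scalar_mx (rG mu) /\ (n'.+1 %| r.-1)%N).
Proof.
move=> irr; exact: (mx_main HF hqF Hr (rA rG) (rB rG) (rAB rG) (rirr irr)).
Qed.

Lemma part1 n (rG : mx_representation F G n) :
  mx_irreducible rG -> n = r \/ (n %| r.-1)%N.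
Proof.
case: n rG => [|n'] rG irr; first by have := irr_pos irr.
by case: (part1' irr) => [->|[_ h]]; [left|right].
Qed.

Lemma unipot n (N : 'M[F]_n) m : N *m N = 0 -> (1 + N) ^+ m = 1 + N *+ m.
Proof.
move=> NN; elim: m => [|m IH]; first by rewrite expr0 mulr0n addr0.
rewrite exprSr IH mulrDl mul1r mulrDr mulr1 mulrnAl -mulmxE NN mul0rn addr0.
by rewrite mulrS addrA.
Qed.

Lemma claim (z : {perm E}) (zG : z \in G)
  (Hz : forall n (rG : mx_representation F G n), mx_irreducible rG -> rG z = 1%:M) :
  forall n (rG : mx_representation F G n), (z ^+ (p ^ n))%g \in rker rG.
Proof.
move=> n; elim: n {-2}n (leqnn n) => [|N IH] n leN rG.
  case: n leN rG => [|//] _ rG.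
  by apply/rkerP; split; [rewrite groupX | rewrite !flatmx0].
case: n leN rG => [|n'] leN rG; first exact: IH.
case: (classic (exists U : 'M_n'.+1, [/\ mxmodule rG U, U != 0 & ~~ row_full U]))
  => [[U [modU nzU nfU]] | hno].
  have n1p : (0 < \rank U)%N by rewrite lt0n mxrank_eq0.
  have n1n : (\rank U < n'.+1)%N by rewrite ltn_neqAle nfU rank_leq_col.
  have nN : (n' <= N)%N by [].
  have n1n' : (\rank U <= n')%N by [].
  have n2 : (\rank (cokermx U) <= n')%N.
    by rewrite mxrank_coker -ltnS ltn_subrL n1p.
  have IH1 := IH _ (leq_trans n1n' nN) (submod_repr modU).
  have IH2 := IH _ (leq_trans n2 nN) (factmod_repr modU).
  rewrite rker_submod in IH1.
  set y := (z ^+ (p ^ n'))%g.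
  have yG : y \in G by rewrite groupX.
  have hy1 : y \in rstab rG U.
    rewrite /y; have -> : (p ^ n' = p ^ \rank U * p ^ (n' - \rank U))%N by rewrite -expnD subnKC.
    by rewrite expgnA groupX.
  have hy2 : y \in rker (factmod_repr modU).
    rewrite /y; have -> : (p ^ n' = p ^ \rank (cokermx U) * p ^ (n' - \rank (cokermx U)))%N.
      by rewrite -expnD subnKC.
    by rewrite expgnA groupX.
  move: hy1; rewrite inE => /andP [_ /eqP hUy].
  move/rkerP: hy2 => [_ hfac].
  set Y := rG y.
  have hN : (Y - 1%:M <= U)%MS.
    rewrite -in_factmod_eq0 linearB /=.
    have := in_factmodJ modU 1%:M yG; rewrite mul1mx.
    by move: hfac; rewrite /= => ->; rewrite mulmx1 => ->; rewrite subrr.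
  have hUN : U *m (Y - 1%:M) = 0 by rewrite mulmxBr hUy mulmx1 subrr.
  have hNN : (Y - 1%:M) *m (Y - 1%:M) = 0.
    by case/submxP: hN => X hX; rewrite {1}hX -mulmxA hUN mulmx0.
  have -> : (z ^+ (p ^ n'.+1))%g = (y ^+ p)%g.
    by rewrite /y -expgnA -expnSr.
  apply/rkerP; split; first by rewrite groupX.
  rewrite (repr_mxX rG _ yG) -/Y -[Y](subrK 1%:M) addrC.
  rewrite (unipot _ hNN) -scaler_nat (pcharf0 chF) scale0r addr0.
  by [].
have irr : mx_irreducible rG.
  apply/mx_irrP; split => // U mU nU; apply/negPn/negP => nf.
  by apply: hno; exists U.
by apply: groupX; apply/rkerP; split => //; apply: Hz.
Qed.


Lemma part2 : exists n (rG : mx_representation F G n), mx_irreducible rG /\ n = r.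
Proof.
case: (classic (exists n (rG : mx_representation F G n), mx_irreducible rG /\ n = r))
  => // H; exfalso.
pose z := (mu ^+ q.-1)%g.
have zG : z \in G by rewrite groupX ?mu_in.
have Hz n (rG : mx_representation F G n) : mx_irreducible rG -> rG z = 1%:M.
  case: n rG => [|n'] rG irr; first by have := irr_pos irr.
  case: (part1' irr) => [e|[sA _]]; first by case: H; exists n'.+1, rG.
  case/is_scalar_mxP: sA => a hAa.
  have a0 : a != 0.
    apply/eqP => a0; have := repr_mx_unit rG mu_in.
    by rewrite hAa a0 -scalemx1 scale0r unitr0.
  have aq : a ^+ q.-1 = 1.
    apply: (mulfI a0); rewrite mulr1 -exprS prednK ?(ltnW q1) //.
    by rewrite -HF expf_card.
  rewrite /z (repr_mxX rG _ mu_in) hAa.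
  by rewrite -rmorphXn /= aq.
have hreg := claim zG Hz (regular_repr F G).
have := subsetP (regular_mx_faithful F G) _ hreg; rewrite inE => /eqP.
rewrite /z -expgnA => /(congr1 (fun s : {perm E} => s 1)).
rewrite muX perm1 mulr1 => e.
have : (gen ^+ (q.-1 * p ^ #|G|) == 1)%g.
  by apply/eqP/val_inj; rewrite FinRing.val_unitX.
rewrite -order_dvdn order_gen.
move=> dv.
have pq : (p %| q ^ r)%N.
  by rewrite Hq -expnM dvdn_exp // muln_gt0 Hk prime_gt0.
have qr0 : (0 < q ^ r)%N by rewrite expn_gt0 (ltnW q1).
have cp : coprime (q ^ r).-1 (p ^ #|G|).
  apply: coprimeXr; apply: coprime_dvdr pq _.
  by rewrite -[X in coprime _ X](prednK qr0) coprimenS.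
rewrite Gauss_dvdl // in dv.
have q10 : (0 < q.-1)%N by move: q1; case: (q) => [|[|]].
have H1 := dvdn_leq q10 dv.
have h : (q < q ^ r)%N by rewrite -{1}(expn1 q) ltn_exp2l ?q1 ?prime_gt1.
have h1 := q1.
move: H1 h h1; set Q := (q ^ r)%N; lia.
Qed.

End Group.


Unset Implicit Arguments.
Close Scope ring_scope.

Theorem mainTheorem11
  (p k r q : nat) (Hp : prime p) (Hk : 0 < k) (Hq : q = p ^ k) (Hr : prime r)
  (F E : finFieldType) (HF : #|F| = q) (HE : #|E| = q ^ r)
  (G : {group {perm E}}) (HG : G :=: GammaL1 E q r) :
  (forall (n : nat) (rG : mx_representation F G n),
      mx_irreducible rG -> n = r \/ n %| r.-1)
  /\ (exists (n : nat) (rG : mx_representation F G n),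
      mx_irreducible rG /\ n = r).
Proof.
split.
  by move=> n rG irr; apply: (part1 Hp Hq Hr HF HE HG irr).
exact: (part2 Hp Hk Hq Hr HF HE HG).
Qed.
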